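(* Let $G=\operatorname{SL}(V)$ with $\dim V=n\ge2$. Then: (i) $b_V$ is alternating; (ii) if $n$ is even, $b_V$ is non-degenerate and $\operatorname{Ker}\psi_V=\langle\gamma_V\rangle^\perp$; (iii) if $n$ is odd, the radical of $b_V$ is $\langle\gamma_V\rangle$ and $V\otimes V^*=\operatorname{Ker}\psi_V\oplus\langle\gamma_V\rangle$; (iv) $\langle\gamma_V\rangle^\perp/\langle\gamma_V\rangle\cong L_G(\varpi_1+\varpi_{n-1})$ as $G$-modules.
   Context: $K$ is an algebraically closed field of characteristic 2. $\psi_V:V\otimes V^*\to K$ is $\psi_V(v\otimes f)=f(v)$. The form $b_V$ on $V\otimes V^*$ is $b_V(v\otimes f,v'\otimes f')=f(v')f'(v)+f(v)f'(v')$, which is $G$-invariant. For a basis $e_1,\dots,e_n$ of $V$ with dual basis $e_i^*$, $\gamma_V=\sum_i e_i\otimes e_i^*$ (independent of the basis). Perps are with respect to $b_V$. $L_G(\lambda)$ is the irreducible rational $G$-module of highest weight $\lambda$, fundamental weights labelled as in Bourbaki. *)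

(* Defs.v *)
(* Model: V = K^n (column vectors, basis e_1..e_n), V* = row vectors via the dual
   basis, and V (x) V* is identified with n x n matrices via v (x) f |-> v f^T.
   Under this (canonical) identification:
     psi_V(X) = tr X,   gamma_V = identity matrix,
     b_V(X,Y) = tr X * tr Y + tr (X Y)   (the bilinear extension of
        b_V(v(x)f, v'(x)f') = f(v')f'(v) + f(v)f'(v')),
     and g in SL(V) acts on V (x) V* by X |-> g X g^{-1}. *)
From HB Require Import structures.
From mathcomp Require Import all_boot all_order all_algebra.
Set Implicit Arguments. Unset Strict Implicit. Unset Printing Implicit Defensive.
Import Order.TTheory GRing.Theory.
Local Open Scope ring_scope.

Definition psiV {K : fieldType} {n : nat} (X : 'M[K]_n) : K := \tr X.

Definition bV {K : fieldType} {n : nat} (X Y : 'M[K]_n) : K :=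
  \tr X * \tr Y + \tr (X *m Y).

Definition gammaV (K : fieldType) (n : nat) : 'M[K]_n := 1%:M.

Definition in_span_gamma {K : fieldType} {n : nat} (X : 'M[K]_n) : Prop :=
  exists c : K, X = c *: gammaV K n.

Definition in_perp_gamma {K : fieldType} {n : nat} (X : 'M[K]_n) : Prop :=
  forall Y : 'M[K]_n, in_span_gamma Y -> bV X Y = 0.

Definition in_radical {K : fieldType} {n : nat} (X : 'M[K]_n) : Prop :=
  forall Y : 'M[K]_n, bV X Y = 0.

Definition bV_alternating (K : fieldType) (n : nat) : Prop :=
  forall X : 'M[K]_n, bV X X = 0.

Definition bV_nondegenerate (K : fieldType) (n : nat) : Prop :=
  forall X : 'M[K]_n, in_radical X -> X = 0.

Definition actG {K : fieldType} {n : nat} (g X : 'M[K]_n) : 'M[K]_n :=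
  g *m X *m invmx g.

Definition in_SL {K : fieldType} {n : nat} (g : 'M[K]_n) : Prop := \det g = 1.

Definition is_subspace {K : fieldType} {n : nat} (W : 'M[K]_n -> Prop) : Prop :=
  W 0 /\ forall (a : K) (X Y : 'M[K]_n), W X -> W Y -> W (a *: X + Y).

Definition G_stable {K : fieldType} {n : nat} (W : 'M[K]_n -> Prop) : Prop :=
  forall g X : 'M[K]_n, in_SL g -> W X -> W (actG g X).

(* The G-module Q := <gamma>^perp / <gamma> is irreducible (nonzero, and the only
   G-submodules of Q are 0 and Q, i.e. the only G-stable subspaces W with
   <gamma> <= W <= <gamma>^perp are <gamma> and <gamma>^perp). *)
Definition quotient_irreducible (K : fieldType) (n : nat) : Prop :=
  (exists X : 'M[K]_n, in_perp_gamma X /\ ~ in_span_gamma X) /\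
  forall W : 'M[K]_n -> Prop, is_subspace W -> G_stable W ->
    (forall X, in_span_gamma X -> W X) -> (forall X, W X -> in_perp_gamma X) ->
    (forall X, W X -> in_span_gamma X) \/ (forall X, in_perp_gamma X -> W X).

(* Upper unitriangular matrices: the unipotent radical U of the Borel subgroup B
   of upper triangular matrices of SL_n (Bourbaki conventions). *)
Definition upper_unitriangular {K : fieldType} {n : nat} (u : 'M[K]_n) : Prop :=
  (forall i j : 'I_n, (j < i)%N -> u i j = 0) /\ (forall i : 'I_n, u i i = 1).

(* Q has a nonzero vector (class of X) fixed by U on which the maximal torus
   T = {diag(d_1..d_n) | prod d_i = 1} acts by the weight
   varpi_1 + varpi_{n-1} : diag(d) |-> d_1 * d_n^{-1}. *)
Definition quotient_highest_weight_w1_wn1 (K : fieldType) (n : nat) : Prop :=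
  exists X : 'M[K]_n, in_perp_gamma X /\ ~ in_span_gamma X /\
    (forall u : 'M[K]_n, upper_unitriangular u ->
        in_span_gamma (actG u X - X)) /\
    (forall d : 'I_n -> K, \prod_(i < n) d i = 1 ->
       forall i0 iN : 'I_n, val i0 = 0%N -> val iN = n.-1 ->
        in_span_gamma (actG (diag_mx (\row_i d i)) X - (d i0 / d iN) *: X)).

(* <gamma>^perp / <gamma> is isomorphic to L_G(varpi_1 + varpi_{n-1}):
   it is the irreducible G-module with highest weight varpi_1 + varpi_{n-1}. *)
Definition quotient_iso_L_w1_wn1 (K : fieldType) (n : nat) : Prop :=
  quotient_irreducible K n /\ quotient_highest_weight_w1_wn1 K n.

(* Main.v *)
Require Import Defs.
From HB Require Import structures.
From mathcomp Require Import all_boot all_order all_algebra all_fingroup.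
From Stdlib Require Import Classical.
Set Implicit Arguments. Unset Strict Implicit. Unset Printing Implicit Defensive.
Import Order.TTheory GRing.Theory.
Local Open Scope ring_scope.

Section H.
Variable K : fieldType.
Hypothesis hK : (2 \in [pchar K])%N.

Lemma natr2 m : (m%:R : K) = (odd m)%:R.
Proof.
rewrite -{1}(odd_double_half m) natrD -muln2 natrM (pcharf0 hK) mulr0 addr0.
by [].
Qed.

Lemma deltaXE n (i j : 'I_n) (X : 'M[K]_n) k l :
  (delta_mx i j *m X) k l = (k == i)%:R * X j l.
Proof.
rewrite !mxE (bigD1 j) //= big1 ?addr0 => [|m /negbTE nm]; rewrite !mxE ?nm.
  by rewrite eqxx andbT.
by rewrite andbF mul0r.
Qed.

Lemma XdeltaE n (i j : 'I_n) (X : 'M[K]_n) k l :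
  (X *m delta_mx i j) k l = X k i * (l == j)%:R.
Proof.
rewrite !mxE (bigD1 i) //= big1 ?addr0 => [|m /negbTE nm]; rewrite !mxE ?nm.
  by rewrite eqxx.
by rewrite mulr0.
Qed.

Lemma tr_Xdelta n (i j : 'I_n) (X : 'M[K]_n) : \tr (X *m delta_mx j i) = X i j.
Proof.
rewrite /mxtrace (bigD1 i) //= big1 ?addr0 => [|m /negbTE nm];
  rewrite XdeltaE ?nm ?eqxx ?mulr1 //.
by rewrite mulr0.
Qed.

Lemma tr_delta n (i j : 'I_n) : \tr (delta_mx i j : 'M[K]_n) = (i == j)%:R.
Proof. by rewrite -(mul1mx (delta_mx i j : 'M[K]_n)) tr_Xdelta mxE eq_sym. Qed.

Lemma sum_sym_char2 (f : nat -> nat -> K) (fs : forall i j, f i j = f j i) m :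
  \sum_(i < m) \sum_(j < m) f i j = \sum_(i < m) f i i.
Proof.
elim: m => [|m IH]; first by rewrite !big_ord0.
rewrite big_ord_recr /= (eq_bigr (fun i : 'I_m => \sum_(j < m) f i j + f i m));
  last by move=> i _; rewrite big_ord_recr.
rewrite big_split /= IH big_ord_recr /= [RHS]big_ord_recr /=.
have -> : \sum_(i < m) f i m = \sum_(i < m) f m i by apply: eq_bigr => i _.
set a := \sum_(i < m) f m i; set b := \sum_(i < m) f i i.
by rewrite -addrA (addrA a) addrr_pchar2 // add0r.
Qed.

Lemma trXX n (X : 'M[K]_n.+1) : \tr (X *m X) = \tr X * \tr X.
Proof.
pose f a b := X (inord a) (inord b) * X (inord b) (inord a).
pose g a b := X (inord a) (inord a) * X (inord b) (inord b).
have -> : \tr (X *m X) = \sum_(i < n.+1) \sum_(j < n.+1) f i j.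
  by apply: eq_bigr => i _; rewrite mxE; apply: eq_bigr => j _; rewrite /f !inord_val.
have -> : \tr X * \tr X = \sum_(i < n.+1) \sum_(j < n.+1) g i j.
  rewrite /mxtrace mulr_suml; apply: eq_bigr => i _; rewrite mulr_sumr.
  by apply: eq_bigr => j _; rewrite /g !inord_val.
rewrite !sum_sym_char2 => [|a b|a b]; last 2 first.
- by rewrite /g mulrC.
- by rewrite /f mulrC.
by [].
Qed.

Lemma bV_alt n (X : 'M[K]_n) : bV X X = 0.
Proof.
case: n X => [|n] X; first by rewrite /bV /mxtrace !big_ord0 mulr0 addr0.
by rewrite /bV trXX addrr_pchar2.
Qed.

Lemma bV_scal n (X : 'M[K]_n) c : bV X (c *: gammaV K n) = (odd n.+1)%:R * (c * \tr X).
Proof.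
rewrite /bV /gammaV scalemx1 mxtrace_scalar mul_mx_scalar mxtraceZ.
rewrite -(mulr_natr c n) /=; have := natr2 n; case: (odd n) => /= ->.
  by rewrite mulr1 mul0r mulrC addrr_pchar2.
by rewrite mulr0 mulr0 mul1r add0r.
Qed.

Lemma bV_delta n (X : 'M[K]_n) i j : bV X (delta_mx j i) = X i j + \tr X * (i == j)%:R.
Proof. by rewrite /bV tr_Xdelta tr_delta eq_sym addrC. Qed.

Lemma radicalE n (X : 'M[K]_n) : in_radical X ->
  forall i j, X i j = \tr X * (i == j)%:R.
Proof.
move=> hX i j; have := hX (delta_mx j i); rewrite bV_delta => /eqP.
by rewrite addr_eq0 oppr_pchar2 // => /eqP.
Qed.

Lemma radical_scal n (X : 'M[K]_n) : in_radical X -> X = \tr X *: gammaV K n.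
Proof.
move=> hX; apply/matrixP => i j; rewrite radicalE // /gammaV !mxE.
by rewrite eq_sym.
Qed.

Lemma addmm m n (M : 'M[K]_(m, n)) : M + M = 0.
Proof. by rewrite -[M]scale1r -scalerDl addrr_pchar2 // scale0r. Qed.

Lemma inv_uniq n (A B : 'M[K]_n) : A *m B = 1%:M -> invmx A = B.
Proof.
move=> AB; have [uA _] := mulmx1_unit AB.
by rewrite -[invmx A]mulmx1 -AB mulmxA mulVmx // mul1mx.
Qed.

Lemma det_invol n (g : 'M[K]_n) : g *m g = 1%:M -> \det g = 1.
Proof.
move=> gg; have h : \det g * \det g = 1 by rewrite -det_mulmx gg det1.
have : (\det g + 1) * (\det g + 1) = 0.
  by rewrite mulrDl !mulrDr h !mul1r mulr1 (addrC 1 (\det g)) addrr_pchar2.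
move/eqP; rewrite mulf_eq0 orbb addr_eq0 oppr_pchar2 // => /eqP //.
Qed.

Definition tel n (a : K) (i j : 'I_n) : 'M[K]_n := 1%:M + a *: delta_mx i j.

Lemma tel_invol n a (i j : 'I_n) : i != j -> tel a i j *m tel a i j = 1%:M.
Proof.
move=> nij; rewrite /tel mulmxDl !mulmxDr !mul1mx mulmx1 -scalemxAl -scalemxAr.
rewrite mul_delta_mx_cond eq_sym (negbTE nij) mulr0n !scaler0 addr0.
by rewrite -addrA addmm addr0.
Qed.

Lemma EXE n (i j : 'I_n) (X : 'M[K]_n) : delta_mx i j *m X *m delta_mx i j = X j i *: delta_mx i j.
Proof.
apply/matrixP => k l; rewrite XdeltaE deltaXE !mxE.
by case: (k == i); case: (l == j); rewrite /= ?mulr0 ?mul0r ?mulr1 ?mul1r.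
Qed.

Lemma conj_tel n a (i j : 'I_n) (X : 'M[K]_n) :
  tel a i j *m X *m tel a i j - X =
  a *: (delta_mx i j *m X + X *m delta_mx i j) + (a ^+ 2 * X j i) *: delta_mx i j.
Proof.
rewrite /tel !mulmxDl !mulmxDr !mul1mx !mulmx1 -!scalemxAl -!scalemxAr EXE.
rewrite scalerDr scalerA -expr2 -scalerA.
rewrite addrC !addrA addNr add0r.
by congr (_ + _); rewrite addrC.
Qed.

Section WS.
Variable n : nat.
Variable W : 'M[K]_n -> Prop.
Hypothesis hW : is_subspace W.
Hypothesis hG : G_stable W.

Lemma W0 : W 0. Proof. by case: hW. Qed.
Lemma WZ a X : W X -> W (a *: X).
Proof. by move=> wx; have := (proj2 hW) a X 0 wx W0; rewrite addr0. Qed.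
Lemma WD X Y : W X -> W Y -> W (X + Y).
Proof. by move=> wx wy; have := (proj2 hW) 1 X Y wx wy; rewrite scale1r. Qed.
Lemma WB X Y : W X -> W Y -> W (X - Y).
Proof. by move=> wx wy; apply: WD => //; rewrite -scaleN1r; apply: WZ. Qed.
Lemma Wsum (I : finType) (F : I -> 'M[K]_n) : (forall i, W (F i)) -> W (\sum_i F i).
Proof. by move=> h; apply: (big_ind W W0 WD) => i _; apply: h. Qed.

Lemma Wconj g h X : \det g = 1 -> g *m h = 1%:M -> W X -> W (g *m X *m h).
Proof.
move=> dg gh wx; have := hG dg wx; by rewrite /actG (inv_uniq gh).
Qed.

Lemma Wtel a i j X : i != j -> W X -> W (tel a i j *m X *m tel a i j - X).
Proof.
move=> nij wx; apply: WB => //; apply: Wconj => //; last exact: tel_invol.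
by apply: det_invol; apply: tel_invol.
Qed.

Variable c : K.
Hypothesis hc0 : c != 0.
Hypothesis hc1 : c != 1.

Lemma Wparts i j X : i != j -> W X ->
  W (delta_mx i j *m X + X *m delta_mx i j) /\ W (X j i *: delta_mx i j).
Proof.
move=> nij wx.
have w1 := Wtel 1 nij wx; have wc := Wtel c nij wx.
rewrite conj_tel scale1r expr1n mul1r in w1; rewrite conj_tel in wc.
set A := delta_mx i j *m X + X *m delta_mx i j in w1 wc *.
set E := X j i *: delta_mx i j.
have eE : (c - c ^+ 2) *: E = c *: (A + X j i *: delta_mx i j) -
                      (c *: A + (c ^+ 2 * X j i) *: delta_mx i j).
  rewrite /E scalerDr opprD addrACA addrN add0r.
  by rewrite !scalerA -scalerBl mulrBl.
have wE : W ((c - c ^+ 2) *: E) by rewrite eE; apply: WB => //; apply: WZ.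
have ncc : c - c ^+ 2 != 0.
  by rewrite expr2 -{1}(mulr1 c) -mulrBr mulf_neq0 // subr_eq0 eq_sym.
have wE' : W E by have := WZ (c - c ^+ 2)^-1 wE; rewrite scalerA mulVf // scale1r.
split => //.
by have := WB w1 wE'; rewrite addrK.
Qed.

Lemma Wperm_conj (s : 'S_n) X : W X -> W (\matrix_(k, l) X (s k) (s l)).
Proof.
move=> wx.
have -> : \matrix_(k, l) X (s k) (s l) = perm_mx s *m X *m perm_mx s^-1.
  by rewrite -row_permE -col_permE; apply/matrixP => k l; rewrite !mxE.
apply: Wconj => //; last by rewrite -perm_mxM mulgV perm_mx1.
by rewrite det_perm oppr_pchar2 // expr1n.
Qed.

Lemma Wdelta_all i j : i != j -> W (delta_mx i j) ->
  forall k l, k != l -> W (delta_mx k l).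
Proof.
move=> nij wd k l nkl.
pose l' := tperm k i l.
pose s : 'S_n := (tperm k i * tperm l' j)%g.
have sk : s k = i.
  rewrite permM tpermL tpermD // ?(eq_sym j) //.
  by rewrite /l' -{2}(tpermL k i) (inj_eq (@perm_inj _ _)) eq_sym.
have sl : s l = j by rewrite permM tpermL.
have := Wperm_conj s wd.
have -> : \matrix_(k0, l0) (delta_mx i j : 'M[K]_n) (s k0) (s l0) = delta_mx k l => //.
apply/matrixP => a b; rewrite !mxE -sk -sl.
by rewrite !(inj_eq (@perm_inj _ _)).
Qed.

Lemma Wdiag i j : i != j -> W (delta_mx i j) -> W (delta_mx i i + delta_mx j j).
Proof.
move=> nij wd.
have nji : j != i by rewrite eq_sym.
have wd' := Wdelta_all nij wd nji.
have [h _] := Wparts nji wd.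
by rewrite !mul_delta_mx addrC in h.
Qed.

Lemma Wtr0 (k0 : 'I_n) : (forall k l, k != l -> W (delta_mx k l)) ->
  (forall k, W (delta_mx k k + delta_mx k0 k0)) ->
  forall Z, \tr Z = 0 -> W Z.
Proof.
move=> hoff hdiag Z trZ.
have eZ : Z = \sum_k \sum_l (if k == l then Z k l *: (delta_mx k l + delta_mx k0 k0)
                              else Z k l *: delta_mx k l).
  transitivity (Z + \tr Z *: delta_mx k0 k0); first by rewrite trZ scale0r addr0.
  rewrite {1}(matrix_sum_delta Z) /mxtrace scaler_suml -big_split; apply: eq_bigr => k _ /=.
  rewrite [RHS](bigD1 k) //= eqxx scalerDr (bigD1 k) //= -!addrA; congr (_ + _).
  rewrite addrC; congr (_ + _); apply: eq_bigr => l nlk.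
  by rewrite eq_sym (negbTE nlk).
rewrite eZ; apply: Wsum => k; apply: Wsum => l.
case: eqP => [<-|/eqP nkl]; apply: WZ; first exact: hdiag.
exact: hoff.
Qed.

Lemma Wirred (k0 : 'I_n) : (forall X, in_span_gamma X -> W X) ->
  (forall X, W X -> in_perp_gamma X) ->
  (forall X, W X -> in_span_gamma X) \/ (forall X, in_perp_gamma X -> W X).
Proof.
move=> hspan hperp.
case: (classic (forall X, W X -> in_span_gamma X)) => [h|nall]; first by left.
have [X hX] := not_all_ex_not _ _ nall; have [wX nX] := imply_to_and _ _ hX.
right.
suff hd : exists i j, i != j /\ W (delta_mx i j).
  have [i [j [nij wd]]] := hd.
  have hoff := Wdelta_all nij wd.
  have hdg : forall k, W (delta_mx k k + delta_mx k0 k0).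
    move=> k; case: (eqVneq k k0) => [->|nk]; first by rewrite addmm; apply: W0.
    by apply: Wdiag => //; apply: hoff.
  have htr := Wtr0 hoff hdg.
  move=> Y hY.
  have := hY (1 *: gammaV K n) (ex_intro _ 1 erefl); rewrite bV_scal mul1r /=.
  have := natr2 n; case: (odd n) => /= hn.
    move=> _; rewrite -(subrK (\tr Y *: gammaV K n) Y); apply: WD.
      apply: htr; rewrite raddfB /= mxtraceZ /gammaV mxtrace1 hn mulr1.
      by rewrite subrr.
    by apply: hspan; exists (\tr Y).
  by rewrite mul1r => /htr.
case: (classic (exists i j, i != j /\ X j i != 0)) => [[i [j [nij nz]]]|noff].
  exists i, j; split => //.
  have [_ h] := Wparts nij wX.
  by have := WZ (X j i)^-1 h; rewrite scalerA mulVf // scale1r.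
have off : forall i j, i != j -> X j i = 0.
  move=> i j nij; apply/eqP; apply: contra_notT noff => nz; by exists i, j.
case: (classic (exists i, X i i != X k0 k0)) => [[i ni]|nd]; last first.
  exfalso; apply: nX; exists (X k0 k0); apply/matrixP => a b.
  rewrite /gammaV !mxE; case: (eqVneq a b) => [<-|nab].
    rewrite mulr1; apply/eqP; apply: contra_notT nd => h; by exists a.
  by rewrite mulr0 off // eq_sym.
have nik : i != k0 by apply: contraNneq ni => ->.
exists i, k0; split => //.
have [h _] := Wparts nik wX.
have e : delta_mx i k0 *m X + X *m delta_mx i k0 = (X k0 k0 + X i i) *: delta_mx i k0.
  apply/matrixP => a b; rewrite [LHS]mxE deltaXE XdeltaE !mxE.
  case: (eqVneq a i) => [->|nai]; case: (eqVneq b k0) => [->|nbk];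
    rewrite /= ?mulr1 ?mul1r ?mulr0 ?mul0r ?addr0 ?add0r //.
  - by rewrite off // eq_sym.
  by rewrite off // eq_sym.
have nz : X k0 k0 + X i i != 0.
  by rewrite -(oppr_pchar2 hK (X k0 k0)) addrC subr_eq0.
by have := WZ (X k0 k0 + X i i)^-1 h; rewrite e scalerA mulVf // scale1r.
Qed.
End WS.
End H.

Lemma exists_c (K : closedFieldType) (hK : (2 \in [pchar K])%N) :
  exists c : K, c != 0 /\ c != 1.
Proof.
have [x hx] := @solve_monicpoly K 2 (fun _ => 1) isT.
rewrite !big_ord_recr big_ord0 /= !mul1r add0r expr0 expr1 in hx.
exists x; split; apply/eqP => ex; move: hx; rewrite ex.
  by rewrite expr0n /= addr0 => /eqP; rewrite eq_sym oner_eq0.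
by rewrite expr1n addrr_pchar2 // => /eqP; rewrite oner_eq0.
Qed.

Lemma bV_sym (K : fieldType) n (X Y : 'M[K]_n) : bV X Y = bV Y X.
Proof. by rewrite /bV mulrC mxtrace_mulC. Qed.

Theorem lemma8p1 (K : closedFieldType) (hK : (2 \in [pchar K])%N)
  (n : nat) (hn : (2 <= n)%N) :
  (* (i) *)
  bV_alternating K n /\
  (* (ii) *)
  (~~ odd n ->
     bV_nondegenerate K n /\
     (forall X : 'M[K]_n, psiV X = 0 <-> in_perp_gamma X)) /\
  (* (iii) *)
  (odd n ->
     (forall X : 'M[K]_n, in_radical X <-> in_span_gamma X) /\
     (forall X : 'M[K]_n, psiV X = 0 -> in_span_gamma X -> X = 0) /\
     (forall X : 'M[K]_n, exists A B : 'M[K]_n,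
        psiV A = 0 /\ in_span_gamma B /\ X = A + B)) /\
  (* (iv) *)
  quotient_iso_L_w1_wn1 K n.
Proof.
have [c [hc0 hc1]] := exists_c hK.
case: n hn => [|[|m]] // _.
have trg : forall a : K, \tr (a *: gammaV K m.+2) = a * (odd m)%:R.
  by move=> a; rewrite mxtraceZ /gammaV mxtrace1 (natr2 hK) /= negbK.
split; first by move=> X; exact: (bV_alt hK).
split.
  rewrite /= negbK => om.
  split.
    move=> X hX; have e := radical_scal hK hX.
    have t0 : \tr X = 0 by rewrite {1}e trg (negbTE om) mulr0.
    by rewrite e t0 scale0r.
  move=> X; split.
    by move=> h Y [a ->]; rewrite (bV_scal hK); rewrite /psiV in h; rewrite h !mulr0.
  move=> h; have := h (1 *: gammaV K m.+2) (ex_intro _ 1 erefl).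
  by rewrite (bV_scal hK) /= (negbTE om) /= mul1r mul1r.
split.
  rewrite /= negbK => om.
  split.
    move=> X; split; first by move=> hX; exists (\tr X); exact: (radical_scal hK hX).
    by move=> [a ->] Y; rewrite bV_sym (bV_scal hK) /= om mul0r.
  split.
    by move=> X h [a e]; move: h; rewrite /psiV e trg om mulr1 => ->; rewrite scale0r.
  move=> X; exists (X - \tr X *: gammaV K m.+2), (\tr X *: gammaV K m.+2).
  split; first by rewrite /psiV raddfB /= trg om mulr1 subrr.
  by split; [exists (\tr X)|rewrite subrK].
have hpd : forall X : 'M[K]_m.+2, \tr X = 0 -> in_perp_gamma X.
  by move=> X t0 Y [a ->]; rewrite (bV_scal hK) t0 !mulr0.
have n0m : (ord0 : 'I_m.+2) != ord_max by [].
have nspan : ~ in_span_gamma (delta_mx ord0 ord_max : 'M[K]_m.+2).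
  move=> [a e]; have := congr1 (fun M : 'M[K]_m.+2 => M ord0 ord_max) e.
  by rewrite /gammaV !mxE /= mulr0 eqxx => /eqP; rewrite oner_eq0.
split.
  split.
    exists (delta_mx ord0 ord_max); split => //.
    by apply: hpd; rewrite tr_delta.
  move=> W hW hG hs hp.
  exact: (Wirred hK hW hG hc0 hc1 ord0 hs hp).
exists (delta_mx ord0 ord_max); split.
  by apply: hpd; rewrite tr_delta.
split => //.
split.
  move=> u [hl hd]; exists 0; rewrite scale0r.
  have du : \det u = 1.
    rewrite -det_tr det_trig; first by apply: big1 => i _; rewrite mxE hd.
    apply/forallP => i; apply/forallP => j; apply/implyP => lij.
    by rewrite mxE hl.
  have uu : u \in unitmx by rewrite unitmxE du unitr1.
  have e1 : u *m delta_mx ord0 ord_max = (delta_mx ord0 ord_max : 'M[K]_m.+2).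
    apply/matrixP => k l; rewrite XdeltaE !mxE.
    case: (eqVneq k ord0) => [->|nk]; first by rewrite hd mul1r.
    rewrite hl ?mul0r //; by rewrite lt0n; apply: contra nk => /eqP k0; apply/eqP/val_inj.
  have e2 : delta_mx ord0 ord_max *m u = (delta_mx ord0 ord_max : 'M[K]_m.+2).
    apply/matrixP => k l; rewrite deltaXE !mxE.
    case: (eqVneq l ord_max) => [->|nl]; first by rewrite hd mulr1 andbT.
    rewrite hl ?mulr0 ?andbF //.
    have := ltn_ord l; rewrite ltnS leq_eqVlt => /orP [/eqP lm|] //.
    by case/eqP: nl; apply/val_inj.
  by rewrite /actG e1 -{1}e2 -mulmxA mulmxV // mulmx1 subrr.
move=> d hd i0 iN h0 hN.
have -> : i0 = ord0 by apply/val_inj.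
have -> : iN = ord_max by apply/val_inj.
have dnz : forall i, d i != 0.
  move=> i; apply/eqP => di; move: hd; rewrite (bigD1 i) //= di mul0r => /eqP.
  by rewrite eq_sym oner_eq0.
pose D := diag_mx (\row_i d i); pose D' := diag_mx (\row_i (d i)^-1).
have DD : D *m D' = 1%:M.
  apply/matrixP => i j; rewrite mul_diag_mx !mxE.
  case: (eqVneq i j) => [->|nij]; first by rewrite !mulr1n mulfV.
  by rewrite !mulr0n mulr0.
exists 0; rewrite scale0r /actG (inv_uniq DD).
apply/matrixP => i j; rewrite mul_mx_diag mul_diag_mx !mxE.
case: (eqVneq i ord0) => [->|ni]; case: (eqVneq j ord_max) => [->|nj];
  rewrite /= ?mulr1 ?mulr0 ?mul0r ?subrr //.
Qed.
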